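(* Let $K\ge 2$, and fix $P_1^{\rm ST},\ldots,P_K^{\rm ST}>0$ and $\Gamma_1^{\rm ST},\ldots,\Gamma_M^{\rm ST}>0$. For a channel realization $\boldsymbol{\alpha}$ consider the problem $$\max_{p_1,\ldots,p_K}\ \log\Big(1+\sum_{k=1}^K h_kp_k\Big)\quad\text{s.t.}\quad p_k\le P_k^{\rm ST}\ \forall k,\quad \sum_{k=1}^K g_{km}p_k\le\Gamma_m^{\rm ST}\ \forall m,\quad p_k\ge0\ \forall k.$$ For almost every realization $\boldsymbol{\alpha}$: this problem has an optimal solution in which only one user $i$ has positive power (D-TDMA is optimal) if and only if there exists a user $i$ which, with $m'=\arg\min_{m\in\{1,\ldots,M\}}\Gamma_m^{\rm ST}/g_{im}$, satisfies both (1) $\frac{\Gamma_{m'}^{\rm ST}}{g_{im'}}\le P_i^{\rm ST}$, and (2) $\frac{h_i}{g_{im'}}\ge\frac{h_j}{g_{jm'}}$ for all $j\ne i$. In that case the optimal transmit power of user $i$ is $p_i^*=\frac{\Gamma_{m'}^{\rm ST}}{g_{im'}}$ and all other users have zero power.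
   Context: $\boldsymbol{\alpha}=(h_1,\ldots,h_K,g_{11},\ldots,g_{KM})$ is a random vector of nonnegative channel power gains ($h_k$: secondary user $k$ to secondary base station; $g_{km}$: secondary user $k$ to primary receiver $m$) with a continuous, differentiable joint cumulative distribution function, the $h_k$'s and $g_{km}$'s being independent. *)

(* Defs.v *)
From HB Require Import structures.
From mathcomp Require Import all_boot all_order all_algebra.
From mathcomp Require Import all_classical all_reals all_analysis.
Set Implicit Arguments. Unset Strict Implicit. Unset Printing Implicit Defensive.
Import Order.TTheory GRing.Theory Num.Theory.
Import numFieldNormedType.Exports.
Local Open Scope classical_set_scope.
Local Open Scope ring_scope.

(* The channel vector alpha = (h_1..h_K, g_11..g_KM) is stored as a random
   vector indexed by 'I_(K + K*M): the first K coordinates are h_k,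
   coordinate K + mxvec_index k m is g_km. *)
Definition chan_h {R : realType} {d} {T : measurableType d} {K M : nat}
  (a : 'I_(K + K * M) -> T -> R) (t : T) (k : 'I_K) : R :=
  a (lshift (K * M) k) t.
Definition chan_g {R : realType} {d} {T : measurableType d} {K M : nat}
  (a : 'I_(K + K * M) -> T -> R) (t : T) (k : 'I_K) (m : 'I_M) : R :=
  a (rshift K (mxvec_index k m)) t.

Definition joint_cdf {R : realType} {d} {T : measurableType d}
  (P : probability T R) {n : nat} (X : 'I_n -> T -> R) (x : 'rV[R]_n) : R :=
  fine (P (\bigcap_(i in [set: 'I_n]) [set t | X i t <= x ord0 i])).

Definition mutually_independent {R : realType} {d} {T : measurableType d}
  (P : probability T R) {n : nat} (X : 'I_n -> T -> R) : Prop :=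
  forall B : 'I_n -> set R, (forall i, measurable (B i)) ->
    fine (P (\bigcap_(i in [set: 'I_n]) (X i @^-1` B i)))
    = \prod_(i < n) fine (P (X i @^-1` B i)).

Definition feasible {R : realType} {K M : nat}
  (Pst : 'I_K -> R) (Gst : 'I_M -> R) (g : 'I_K -> 'I_M -> R)
  (p : 'I_K -> R) : Prop :=
  (forall k, p k <= Pst k) /\
  (forall m, \sum_(k < K) g k m * p k <= Gst m) /\
  (forall k, 0 <= p k).

Definition objective {R : realType} {K : nat} (h : 'I_K -> R) (p : 'I_K -> R) : R :=
  ln (1 + \sum_(k < K) h k * p k).

Definition is_optimal {R : realType} {K M : nat}
  (Pst : 'I_K -> R) (Gst : 'I_M -> R) (h : 'I_K -> R) (g : 'I_K -> 'I_M -> R)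
  (p : 'I_K -> R) : Prop :=
  feasible Pst Gst g p /\
  forall q, feasible Pst Gst g q -> objective h q <= objective h p.

Definition single_user {R : realType} {K : nat} (i : 'I_K) (p : 'I_K -> R) : Prop :=
  0 < p i /\ forall j, j != i -> p j = 0.

Definition is_argmin_ratio {R : realType} {K M : nat}
  (Gst : 'I_M -> R) (g : 'I_K -> 'I_M -> R) (i : 'I_K) (m' : 'I_M) : Prop :=
  forall m, Gst m' / g i m' <= Gst m / g i m.

Definition dtdma_condition {R : realType} {K M : nat}
  (Pst : 'I_K -> R) (Gst : 'I_M -> R) (h : 'I_K -> R) (g : 'I_K -> 'I_M -> R)
  (i : 'I_K) (m' : 'I_M) : Prop :=
  is_argmin_ratio Gst g i m' /\
  Gst m' / g i m' <= Pst i /\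
  (forall j, j != i -> h j / g j m' <= h i / g i m').

Definition dtdma_power {R : realType} {K M : nat}
  (Gst : 'I_M -> R) (g : 'I_K -> 'I_M -> R) (i : 'I_K) (m' : 'I_M)
  (k : 'I_K) : R :=
  if k == i then Gst m' / g i m' else 0.

(* Main.v *)
Require Import Defs.
From HB Require Import structures.
From mathcomp Require Import all_boot all_order all_algebra.
From mathcomp Require Import all_classical all_reals all_analysis.
Import Order.TTheory GRing.Theory Num.Theory.
Import numFieldNormedType.Exports.
Local Open Scope classical_set_scope.
Local Open Scope ring_scope.
From mathcomp Require Import ring lra.

Lemma sum_single (R : realType) (K : nat) (w p : 'I_K -> R) (i : 'I_K) :
  (forall k, k != i -> p k = 0) -> \sum_(k < K) w k * p k = w i * p i.
Proof.
move=> H; rewrite (bigD1 i) //= big1 ?addr0 // => k /H ->; by rewrite mulr0.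
Qed.

Lemma sum_two (R : realType) (K : nat) (w : 'I_K -> R) (i j : 'I_K) (a b : R) :
  i != j ->
  \sum_(k < K) w k * (if k == i then a else if k == j then b else 0)
  = w i * a + w j * b.
Proof.
move=> ij; rewrite (bigD1 i) //= eqxx (bigD1 j) /=; last by rewrite eq_sym.
rewrite eq_sym (negbTE ij) eqxx big1 ?addr0 //.
by move=> k /andP[ki kj]; rewrite (negbTE ki) (negbTE kj) mulr0.
Qed.

Lemma eps_exists (R : realType) (M : nat) (a : R) (t c : 'I_M -> R) :
  0 < a -> (forall m, 0 < t m) -> (forall m, 0 <= c m) ->
  exists e, 0 < e /\ e <= a /\ forall m, c m * e <= t m.
Proof.
move=> a0 t0 c0.
set D := a^-1 + \sum_(m < M) c m / t m.
have S0 : 0 <= \sum_(m < M) c m / t m.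
  by apply: sumr_ge0 => m _; apply: divr_ge0 => //; exact: ltW.
have D0 : 0 < D by rewrite /D; apply: ltr_wpDr => //; rewrite invr_gt0.
exists D^-1; split; first by rewrite invr_gt0.
split.
  rewrite -(invrK a) lef_pV2 ?posrE ?invr_gt0 //.
  by rewrite /D lerDl.
move=> m.
have cm : c m / t m <= D.
  rewrite /D (bigD1 m) //= addrCA lerDl; apply: addr_ge0; first by rewrite invr_ge0 ltW.
  by apply: sumr_ge0 => k _; apply: divr_ge0 => //; exact: ltW.
have tm := t0 m.
rewrite ler_pdivrMr // in cm.
rewrite -(ler_pM2r D0) mulfVK ?gt_eqF //.
by rewrite mulrC.
Qed.

Lemma exists_argmin (R : realType) (M : nat) (f : 'I_M -> R) :
  (0 < M)%N -> exists m', forall m, f m' <= f m.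
Proof.
move=> M0.
case: (@arg_minP _ R _ (Ordinal M0) predT f erefl) => m' _ H.
by exists m' => m; apply: H.
Qed.

Lemma opt_sum (R : realType) (K M : nat) (Pst : 'I_K -> R) (Gst : 'I_M -> R)
  (h : 'I_K -> R) (g : 'I_K -> 'I_M -> R) (p q : 'I_K -> R) :
  (forall k, 0 <= h k) ->
  is_optimal Pst Gst h g p -> feasible Pst Gst g q ->
  \sum_(k < K) h k * q k <= \sum_(k < K) h k * p k.
Proof.
move=> h0 [[_ [_ p0]] opt] fq; have := opt q fq; case: fq => _ [_ q0].
have Sq : 0 <= \sum_(k < K) h k * q k by apply: sumr_ge0 => k _; exact: mulr_ge0.
have Sp : 0 <= \sum_(k < K) h k * p k by apply: sumr_ge0 => k _; exact: mulr_ge0.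
rewrite /objective ler_ln ?posrE; last by lra.
  by rewrite lerD2l.
by lra.
Qed.

Lemma exists_other (K : nat) (i : 'I_K) : (2 <= K)%N -> exists j : 'I_K, j != i.
Proof.
move=> K2; have : (1 < #|'I_K|)%N by rewrite card_ord.
case/card_gt1P => x [y [_ _ xy]].
case: (eqVneq x i) => [xi|xi]; last by exists x.
by exists y; rewrite -xi eq_sym.
Qed.

Lemma dtdma_feasible (R : realType) (K M : nat) (Pst : 'I_K -> R) (Gst : 'I_M -> R)
  (g : 'I_K -> 'I_M -> R) (i : 'I_K) (m' : 'I_M) :
  (forall k, 0 < Pst k) -> (forall m, 0 < Gst m) -> (forall k m, 0 < g k m) ->
  is_argmin_ratio Gst g i m' -> Gst m' / g i m' <= Pst i ->
  feasible Pst Gst g (dtdma_power Gst g i m').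
Proof.
move=> P0 G0 g0 am c1.
have r0 : 0 < Gst m' / g i m' by apply: divr_gt0.
split; [|split].
- move=> k; rewrite /dtdma_power; case: ifP => [/eqP->//|_]; exact: ltW.
- move=> m; rewrite (@sum_single _ _ _ _ i); last first.
    by move=> k /negbTE ki; rewrite /dtdma_power ki.
  rewrite /dtdma_power eqxx mulrC -ler_pdivlMr //; exact: am.
- by move=> k; rewrite /dtdma_power; case: ifP => _ //; exact: ltW.
Qed.

Lemma det_main (R : realType) (K M : nat) (Pst : 'I_K -> R) (Gst : 'I_M -> R)
  (h : 'I_K -> R) (g : 'I_K -> 'I_M -> R) :
  (2 <= K)%N -> (0 < M)%N -> (forall k, 0 < Pst k) -> (forall m, 0 < Gst m) ->
  (forall k, 0 < h k) -> (forall k m, 0 < g k m) ->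
  (forall i m m2, m != m2 -> Gst m / g i m != Gst m2 / g i m2) ->
  ((exists p, is_optimal Pst Gst h g p /\ exists i, single_user i p)
     <-> (exists i m', dtdma_condition Pst Gst h g i m')) /\
  (forall i m', dtdma_condition Pst Gst h g i m' ->
     is_optimal Pst Gst h g (dtdma_power Gst g i m')).
Proof.
move=> K2 M0 P0 G0 h0 g0 notie.
have hge k : 0 <= h k := ltW (h0 k).
have sumd w i m' : \sum_(k < K) w k * dtdma_power Gst g i m' k = w i * (Gst m' / g i m').
  rewrite (@sum_single _ _ _ _ i); first by rewrite /dtdma_power eqxx.
  by move=> k /negbTE ki; rewrite /dtdma_power ki.
have part2 : forall i m', dtdma_condition Pst Gst h g i m' ->
    is_optimal Pst Gst h g (dtdma_power Gst g i m').
  move=> i m' [am [c1 c2]].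
  split; first exact: dtdma_feasible.
  move=> q [qP [qG q0]].
  have Sq : 0 <= \sum_(k < K) h k * q k by apply: sumr_ge0 => k _; exact: mulr_ge0.
  have r0 : 0 < Gst m' / g i m' by apply: divr_gt0.
  have hr : 0 <= h i * (Gst m' / g i m') by apply: mulr_ge0 => //; exact: ltW.
  rewrite /objective sumd ler_ln; last 2 first.
    by rewrite posrE; lra.
    by rewrite posrE; lra.
  rewrite lerD2l.
  set c := h i / g i m'.
  have c0 : 0 <= c by apply: divr_ge0 => //; exact: ltW.
  apply: (@le_trans _ _ (\sum_(k < K) c * (g k m' * q k))).
    apply: ler_sum => k _; rewrite mulrA ler_wpM2r //.
    case: (eqVneq k i) => [->|ki]; first by rewrite /c mulfVK ?gt_eqF.
    by have := c2 k ki; rewrite ler_pdivrMr.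
  rewrite -mulr_sumr.
  apply: (@le_trans _ _ (c * Gst m')); first exact: ler_wpM2l.
  by rewrite /c mulrAC -mulrA.
split; last exact: part2.
split; last first.
  move=> [i [m' cond]]; exists (dtdma_power Gst g i m'); split; first exact: part2.
  exists i; split; first by rewrite /dtdma_power eqxx; apply: divr_gt0.
  by move=> j /negbTE ji; rewrite /dtdma_power ji.
move=> [p [[fp opt] [i [pi0 pj]]]].
have [m' am] := @exists_argmin R M (fun m => Gst m / g i m) M0.
exists i, m'.
have [fP [fG f0]] := fp.
have sump w : \sum_(k < K) w k * p k = w i * p i by apply: sum_single.
have optS q : feasible Pst Gst g q -> \sum_(k < K) h k * q k <= h i * p i.
  by move=> fq; rewrite -sump; apply: (@opt_sum _ _ _ _ _ _ _ _ _ hge (conj fp opt) fq).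
set r := Gst m' / g i m'.
have r0 : 0 < r by apply: divr_gt0.
have pir : p i <= r.
  by have := fG m'; rewrite sump mulrC -ler_pdivlMr.
have [j ji] := @exists_other _ i K2.
have ij : i != j by rewrite eq_sym.
have c1 : r <= Pst i.
  rewrite leNgt; apply/negP => Pr.
  have s0 m : 0 < Gst m - g i m * p i.
    have : p i < Gst m / g i m.
      by apply: (le_lt_trans (fP i)); apply: (lt_le_trans Pr); exact: am.
    by rewrite ltr_pdivlMr // => H1; rewrite subr_gt0 mulrC.
  have [e [e0 [eP eG]]] := @eps_exists _ _ (Pst j) _ _ (P0 j) s0 (fun m => ltW (g0 j m)).
  have fq : feasible Pst Gst g
      (fun k => if k == i then p i else if k == j then e else 0).
    split; [|split].
    - move=> k; case: ifP => [/eqP->//|_]; case: ifP => [/eqP->//|_]; exact: ltW.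
    - move=> m; rewrite sum_two //; have := eG m; lra.
    - move=> k; case: ifP => _ //; case: ifP => _ //; exact: ltW.
  have := optS _ fq; rewrite sum_two //.
  have : 0 < h j * e by apply: mulr_gt0.
  lra.
have pir2 : r <= p i.
  have := optS _ (@dtdma_feasible _ _ _ _ _ _ _ _ P0 G0 g0 am c1).
  by rewrite sumd -/r ler_pM2l.
have pr : p i = r by apply/eqP; rewrite eq_le pir pir2.
split => //; split => //.
move=> k ki; rewrite leNgt; apply/negP => H.
have t0 m : 0 < (if m == m' then Gst m' else Gst m - g i m * r).
  case: ifP => mm //.
  have : r < Gst m / g i m.
    rewrite lt_neqAle am andbT; apply: notie; by rewrite eq_sym mm.
  by rewrite ltr_pdivlMr // => H1; rewrite subr_gt0 mulrC.
have [e [e0 [eP eG]]] := @eps_exists _ _ (Pst k) _ _ (P0 k) t0 (fun m => ltW (g0 k m)).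
set dl := e * g k m' / g i m'.
have dl0 : 0 <= dl by apply: divr_ge0; [apply: mulr_ge0; exact: ltW|exact: ltW].
have gd : g i m' * dl = g k m' * e.
  by rewrite /dl mulrC mulfVK ?gt_eqF // mulrC.
have gr : g i m' * r = Gst m' by rewrite /r mulrC mulfVK ?gt_eqF.
have ik : i != k by rewrite eq_sym.
have dlr : dl <= r.
  rewrite -(ler_pM2l (g0 i m')) gd gr; have := eG m'; rewrite eqxx; lra.
have fq : feasible Pst Gst g
    (fun k' => if k' == i then r - dl else if k' == k then e else 0).
  split; [|split].
  - move=> k'; case: ifP => [/eqP->|_]; first by lra.
    case: ifP => [/eqP->//|_]; exact: ltW.
  - move=> m; rewrite sum_two // mulrBr.
    have := eG m; case: (eqVneq m m') => [->|mm].
      rewrite gd gr; lra.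
    move=> hm.
    have : 0 <= g i m * dl by apply: mulr_ge0 => //; exact: ltW.
    lra.
  - move=> k'; case: ifP => _; first by lra.
    by case: ifP => _ //; exact: ltW.
have := optS _ fq; rewrite sum_two // pr mulrBr.
have hk : h i * dl = e * g k m' * (h i / g i m').
  by rewrite /dl; field; rewrite gt_eqF.
have hk2 : e * g k m' * (h k / g k m') = h k * e.
  by field; rewrite gt_eqF.
have : e * g k m' * (h i / g i m') < e * g k m' * (h k / g k m').
  by rewrite ltr_pM2l //; apply: mulr_gt0.
lra.
Qed.

Set Implicit Arguments. Unset Strict Implicit. Unset Printing Implicit Defensive.
Set Implicit Arguments. Unset Strict Implicit. Unset Printing Implicit Defensive.

Definition pr d (T : measurableType d) (R : realType) (P : probability T R)
  (A : set T) : R := fine (P A).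

Section PR.
End PR.

Lemma prE d (T : measurableType d) (R : realType) (P : probability T R) (A : set T) :
  measurable A -> P A = (pr P A)%:E.
Proof. by move=> mA; rewrite /pr fineK // fin_num_measure. Qed.

Lemma pr_ge0 d (T : measurableType d) (R : realType) (P : probability T R) (A : set T) :
  0 <= pr P A.
Proof. exact: fine_ge0 (measure_ge0 P A). Qed.

Lemma pr_le1 d (T : measurableType d) (R : realType) (P : probability T R) (A : set T) :
  measurable A -> pr P A <= 1.
Proof. by move=> mA; rewrite -lee_fin -prE // probability_le1. Qed.

Lemma pr_le d (T : measurableType d) (R : realType) (P : probability T R) (A B : set T) :
  measurable A -> measurable B -> A `<=` B -> pr P A <= pr P B.
Proof.
by move=> mA mB AB; rewrite -lee_fin -!prE //; apply: le_measure => //; rewrite inE.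
Qed.

Lemma prU d (T : measurableType d) (R : realType) (P : probability T R) (A B : set T) :
  measurable A -> measurable B -> pr P (A `|` B) <= pr P A + pr P B.
Proof.
move=> mA mB; rewrite -lee_fin EFinD -!prE //; last exact: measurableU.
exact: measureU2.
Qed.

Lemma prD d (T : measurableType d) (R : realType) (P : probability T R) (A B : set T) :
  measurable A -> measurable B -> B `<=` A -> pr P (A `\` B) = pr P A - pr P B.
Proof.
move=> mA mB BA; apply: EFin_inj; rewrite EFinB -!prE //; last exact: measurableD.
rewrite measureD //; last by apply: (le_lt_trans (probability_le1 P mA)); exact: ltry.
by rewrite setIidr.
Qed.

Lemma pr_setT d (T : measurableType d) (R : realType) (P : probability T R) :
  pr P setT = 1.
Proof. by rewrite /pr probability_setT. Qed.

Lemma pr_setC d (T : measurableType d) (R : realType) (P : probability T R) (A : set T) :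
  measurable A -> pr P (~` A) = 1 - pr P A.
Proof.
move=> mA; apply: EFin_inj; rewrite EFinB -!prE //; last exact: measurableC.
exact: probability_setC.
Qed.

Lemma pr0 d (T : measurableType d) (R : realType) (P : probability T R) (A : set T) :
  measurable A -> pr P A = 0 -> P A = 0.
Proof. by move=> mA h; rewrite prE // h. Qed.

Lemma pr_bigU d (T : measurableType d) (R : realType) (P : probability T R)
  (S : nat -> set T) (L : nat) :
  (forall l, measurable (S l)) ->
  pr P (\big[setU/set0]_(l < L) S l) <= \sum_(l < L) pr P (S l).
Proof.
move=> mS; elim: L => [|L IH].
  by rewrite !big_ord0 /pr measure0.
rewrite !big_ord_recr /=.
apply: (le_trans (prU _ _ _)) => //; last by rewrite lerD2r.
by apply: bigsetU_measurable => i _.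
Qed.

Lemma meas_le d (T : measurableType d) (R : realType) (X : {mfun T >-> R}) (r : R) :
  measurable [set t | X t <= r].
Proof. exact: (measurable_funPTI X (measurable_realfun.closed_measurable (@closed_le R r))). Qed.

Lemma meas_gt d (T : measurableType d) (R : realType) (X : {mfun T >-> R}) (r : R) :
  measurable [set t | r < X t].
Proof. exact: (measurable_funPTI X (measurable_realfun.open_measurable (@open_gt R r))). Qed.

Lemma tail_lemma d (T : measurableType d) (R : realType) (P : probability T R)
  (X : {mfun T >-> R}) (e : R) :
  0 < e -> exists T0, 1 - e <= pr P [set t | X t <= T0].
Proof.
move=> e0; apply/not_existsP => H.
have H' n : pr P [set t | X t <= n%:R] <= 1 - e.
  by have := H n%:R; move/negP; rewrite -ltNge => /ltW.
pose F := fun n : nat => [set t | X t <= n%:R].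
have mF n : measurable (F n) by exact: meas_le.
have UF : \bigcup_n F n = setT.
  apply/seteqP; split => // t _.
  exists (Num.Def.archi_bound `|X t|) => //; rewrite /F /=.
  apply: (le_trans (ler_norm _)); apply: ltW; apply: archi_boundP; exact: normr_ge0.
have ndF : nondecreasing_seq F.
  move=> n m nm; apply/subsetPset => t1; rewrite /F /= => h.
  by apply: (le_trans h); rewrite ler_nat.
have mU : measurable (\bigcup_n F n) by rewrite UF.
have := nondecreasing_cvg_mu (mu:=P) mF mU ndF.
move=> hc.
have lim1 : lim ((P \o F) n @[n --> \oo]) = 1%E.
  by rewrite (cvg_lim _ hc) // UF; exact: probability_setT.
have : (lim ((P \o F) n @[n --> \oo]) <= (1 - e)%:E)%E.
  apply: lime_le; first by apply/cvg_ex; eexists; exact: hc.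
  by apply: nearW => n /=; rewrite (prE P (mF n)) lee_fin; exact: H'.
rewrite lim1 lee_fin; lra.
Qed.

Definition cdf d (T : measurableType d) (R : realType) (P : probability T R)
  (X : {mfun T >-> R}) (x : R) : R := pr P [set t | X t <= x].

Lemma cdf_le d (T : measurableType d) (R : realType) (P : probability T R)
  (X : {mfun T >-> R}) x y : x <= y -> cdf P X x <= cdf P X y.
Proof.
move=> xy; apply: pr_le; try exact: meas_le.
by move=> t /= h; exact: le_trans h xy.
Qed.

Lemma joint_prod d (T : measurableType d) (R : realType) (P : probability T R) (n : nat)
  (X : 'I_n -> {mfun T >-> R}) (r : 'rV[R]_n) :
  mutually_independent P (fun i => X i : T -> R) ->
  joint_cdf P (fun i => X i : T -> R) r = \prod_(i < n) cdf P (X i) (r ord0 i).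
Proof.
move=> Hind.
exact: (Hind (fun i => [set y | y <= r ord0 i])
  (fun i => measurable_realfun.closed_measurable (@closed_le R (r ord0 i)))).
Qed.

Lemma cdf_cont d (T : measurableType d) (R : realType) (P : probability T R) (n : nat)
  (X : 'I_n -> {mfun T >-> R}) (c : 'I_n) :
  mutually_independent P (fun i => X i : T -> R) ->
  continuous (joint_cdf P (fun i => X i : T -> R)) ->
  continuous (cdf P (X c)).
Proof.
move=> Hind Hc.
have /choice [N HN] : forall j, exists N0, 1 - 2^-1 <= cdf P (X j) N0.
  by move=> j; apply: tail_lemma.
set C := \prod_(j < n | j != c) cdf P (X j) (N j).
have C0 : 0 < C.
  apply: prodr_gt0 => j _; apply: (lt_le_trans _ (HN j)); lra.
pose u : 'rV[R]_n := \row_j (j == c)%:R.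
pose w : 'rV[R]_n := \row_j (if j == c then 0 else N j).
pose phi := fun x : R => x *: u + w.
have eq : cdf P (X c) = (fun y => y * C^-1) \o (joint_cdf P (fun i => X i : T -> R)) \o phi.
  apply: funext => x /=; rewrite joint_prod // (bigD1 c) //=.
  rewrite /phi !mxE eqxx mulr1 addr0.
  rewrite (eq_bigr (fun j => cdf P (X j) (N j))); last first.
    by move=> j /negbTE jc; rewrite !mxE jc mulr0 add0r.
  by rewrite -/C mulfK // gt_eqF.
rewrite eq => x; apply: continuous_comp.
  rewrite /phi; apply: continuousD; first exact: scalel_continuous.
  exact: cst_continuous.
apply: continuous_comp; first exact: Hc.
exact: mulrr_continuous.
Qed.

Lemma cdf_neg0 d (T : measurableType d) (R : realType) (P : probability T R)
  (X : {mfun T >-> R}) x : (forall t, 0 <= X t) -> x < 0 -> cdf P X x = 0.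
Proof.
move=> X0 x0; rewrite /cdf /pr.
have -> : [set t | X t <= x] = set0.
  apply/seteqP; split => // t /= h; have := X0 t; lra.
by rewrite measure0.
Qed.

Lemma cdf_at0 d (T : measurableType d) (R : realType) (P : probability T R)
  (X : {mfun T >-> R}) : (forall t, 0 <= X t) -> continuous (cdf P X) -> cdf P X 0 = 0.
Proof.
move=> X0 Hc.
have F0 : 0 <= cdf P X 0 by exact: pr_ge0.
apply/eqP; rewrite eq_le F0 andbT leNgt; apply/negP => Fp.
have := @cvgr_dist_lt _ _ _ _ _ _ _ (Hc 0) _ Fp.
move=> Hn; have [δ δ0 Hb] := (nbhs_ballP _ _).1 (Hn ltac:(exact: nbhs_filter)).
have hb : ball 0 δ (- (δ / 2)).
  rewrite /= in δ0.
  rewrite -ball_normE /ball_ /= sub0r opprK ger0_norm; lra.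
have := Hb _ hb.
rewrite (@cdf_neg0 _ _ _ _ _ (- (δ / 2))) //; last by rewrite /= in δ0; lra.
by rewrite subr0 ger0_norm // ltxx.
Qed.

Definition Ioc (R : realType) (p q : R) : set R := [set y | p < y] `&` [set y | y <= q].

Lemma meas_Ioc (R : realType) (p q : R) : measurable (Ioc p q).
Proof.
apply: measurableI.
  exact: (measurable_realfun.open_measurable (@open_gt R p)).
exact: (measurable_realfun.closed_measurable (@closed_le R q)).
Qed.

Lemma pr_Ioc d (T : measurableType d) (R : realType) (P : probability T R)
  (X : {mfun T >-> R}) (p q : R) : p <= q ->
  pr P (X @^-1` Ioc p q) = cdf P X q - cdf P X p.
Proof.
move=> pq; rewrite /cdf -prD; try exact: meas_le.
  congr (pr P _); apply/seteqP; split => t /=.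
    by move=> [h1 h2]; split => //; apply/negP; rewrite -ltNge.
  by move=> [h1 /negP h2]; split => //=; rewrite ltNge.
by move=> t /= h; exact: le_trans h pq.
Qed.

Lemma cover (R : realType) (a : nat -> R) (L : nat) (x : R) :
  a 0%N < x -> x <= a L -> exists2 l, (l < L)%N & a l < x /\ x <= a l.+1.
Proof.
move=> h0; elim: L => [|L IH] hL; first by have := lt_le_trans h0 hL; rewrite ltxx.
case: (leP x (a L)) => h.
  by have [l lL hl] := IH h; exists l => //; apply: (ltn_trans lL).
by exists L.
Qed.

Lemma in_bigsetU (T : Type) (S : nat -> set T) (L l : nat) (t : T) :
  (l < L)%N -> S l t -> (\big[setU/set0]_(i < L) S i) t.
Proof. by move=> lL h; rewrite -bigcup_mkord; exists l. Qed.

Lemma pair_indep d (T : measurableType d) (R : realType) (P : probability T R) (n : nat)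
  (X : 'I_n -> {mfun T >-> R}) (a b : 'I_n) :
  mutually_independent P (fun i => X i : T -> R) -> a != b ->
  forall A B, measurable A -> measurable B ->
  pr P (X a @^-1` A `&` X b @^-1` B) = pr P (X a @^-1` A) * pr P (X b @^-1` B).
Proof.
move=> Hind ab A B mA mB.
pose Bf := fun j => if j == a then A else if j == b then B else setT.
have mBf j : measurable (Bf j).
  by rewrite /Bf; case: ifP => _ //; case: ifP => _ //.
have := Hind Bf mBf.
have -> : \bigcap_(i in [set: 'I_n]) ((X i : T -> R) @^-1` Bf i) = X a @^-1` A `&` X b @^-1` B.
  apply/seteqP; split => t /=.
    move=> H; split.
      by have := H a I; rewrite /Bf eqxx.
    by have := H b I; rewrite /Bf eq_sym (negbTE ab) eqxx.
  move=> [Ha Hb] j _; rewrite /Bf; case: ifP => [/eqP->//|_].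
  by case: ifP => [/eqP->//|_].
rewrite /pr => ->; rewrite (bigD1 a) //= (bigD1 b) /=; last by rewrite eq_sym.
rewrite big1 ?mulr1.
  by rewrite /Bf eqxx eq_sym (negbTE ab) eqxx.
move=> j /andP[ja jb]; rewrite /Bf (negbTE ja) (negbTE jb) preimage_setT.
exact: pr_setT.
Qed.

Lemma small_zero (R : realType) (x : R) :
  0 <= x -> (forall L : nat, (2 <= L)%N -> x <= 2 / L%:R) -> x = 0.
Proof.
move=> x0 H; apply/eqP; rewrite eq_le x0 andbT leNgt; apply/negP => xp.
set L := (Num.Def.archi_bound (2 / x)).+2.
have hb : 2 / x < L%:R.
  apply: (lt_le_trans (archi_boundP _)); first by apply: divr_ge0.
  by rewrite ler_nat /L (leq_trans (leqnSn _) (leqnSn _)).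
have := H L erefl.
have L0 : 0 < L%:R :> R by rewrite ltr0n /L.
rewrite ler_pdivlMr // => h.
move: hb; rewrite ltr_pdivrMr // => h2; lra.
Qed.

Lemma pair_key d (T : measurableType d) (R : realType) (P : probability T R)
  (X Y : {mfun T >-> R}) (lam : R) :
  0 < lam -> (forall t, 0 <= X t) -> continuous (cdf P X) ->
  (forall A B, measurable A -> measurable B ->
     pr P (X @^-1` A `&` Y @^-1` B) = pr P (X @^-1` A) * pr P (Y @^-1` B)) ->
  forall L : nat, (2 <= L)%N ->
  pr P [set t | Y t = lam * X t] <= 2 / L%:R.
Proof.
move=> lam0 X0 Fc Hind L L2.
have L0 : 0 < L%:R :> R by rewrite ltr0n (leq_trans _ L2).
set il := L%:R^-1 : R.
have il0 : 0 < il by rewrite invr_gt0.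
have ilh : 2 * il <= 1 by rewrite /il ler_pdivrMr // mul1r ler_nat.
have [T0 HT0] := tail_lemma P X il0.
set FT := cdf P X T0.
have HT : 1 - il <= FT := HT0.
have FT0 : 0 < FT by lra.
have FT1 : FT <= 1 by apply: pr_le1; exact: meas_le.
have Fm1 : cdf P X (-1) = 0 by apply: cdf_neg0 => //; lra.
have T0ge : -1 <= T0.
  rewrite leNgt; apply/negP => h.
  have : FT = 0 by apply: cdf_neg0 => //; lra.
  lra.
have /choice [a Ha] : forall l : nat, exists c, (l <= L)%N -> cdf P X c = l%:R * il * FT.
  move=> l; case: (leqP l L) => lL; last by exists 0.
  have v0 : 0 <= l%:R * il * FT by apply: mulr_ge0; [apply: mulr_ge0 => //; exact: ltW | exact: ltW].
  have h1 : l%:R * il <= 1 by rewrite ler_pdivrMr // mul1r ler_nat.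
  have v1 : l%:R * il * FT <= FT.
    by have := ler_wpM2r (ltW FT0) h1; rewrite mul1r.
  have [c _ Hc] := @IVT R (cdf P X) (-1) T0 (l%:R * il * FT) T0ge
    (continuous_subspaceT Fc) ltac:(rewrite Fm1 min_l ?max_r ?v0 ?v1 //; exact: ltW).
  by exists c.
have mono l : (l < L)%N -> a l <= a l.+1.
  move=> lL; rewrite leNgt; apply/negP => h.
  have := cdf_le P X (ltW h); rewrite !Ha //; last exact: ltnW.
  rewrite -natr1.
  have := mulr_gt0 il0 FT0.
  lra.
have dF l : (l < L)%N -> cdf P X (a l.+1) - cdf P X (a l) = il * FT.
  move=> lL; rewrite !Ha //; last exact: ltnW.
  rewrite -natr1; ring.
set E := [set t | Y t = lam * X t].
set A0 := [set t | X t <= a 0%N].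
set AL := [set t | a L < X t].
set S := fun l => X @^-1` Ioc (a l) (a l.+1) `&` Y @^-1` Ioc (lam * a l) (lam * a l.+1).
have mS l : measurable (S l).
  by apply: measurableI; apply: measurable_funPTI; exact: meas_Ioc.
have mA0 : measurable A0 by exact: meas_le.
have mAL : measurable AL by exact: meas_gt.
have mU : measurable (\big[setU/set0]_(l < L) S l).
  by apply: bigsetU_measurable => l _.
have cov : E `<=` A0 `|` AL `|` \big[setU/set0]_(l < L) S l.
  move=> t; rewrite /E /= => Et.
  case: (leP (X t) (a 0%N)) => h0; first by left; left.
  case: (leP (X t) (a L)) => hL; last by left; right.
  right; have [l lL [h1 h2]] := cover h0 hL.
  apply: (in_bigsetU lL); split; first by split.
  by rewrite /Ioc /= Et; split => /=; [rewrite ltr_pM2l | rewrite ler_pM2l].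
have mE : measurable E.
  have -> : E = (fun t => Y t - lam * X t) @^-1` [set 0].
    apply/seteqP; split => t /= h; first by rewrite h subrr.
    by apply/eqP; rewrite -subr_eq0; apply/eqP.
  have mf : measurable_fun setT (fun t => Y t - lam * X t).
    apply: measurable_realfun.measurable_funB; first exact: measurable_funPT.
    apply: measurable_realfun.measurable_funM; first exact: measurable_cst.
    exact: measurable_funPT.
  by rewrite -[_ @^-1` _]setTI; apply: mf => //; exact: measurable_set1.
have hE : pr P E <= pr P A0 + pr P AL + pr P (\big[setU/set0]_(l < L) S l).
  apply: (le_trans (pr_le P mE _ cov)).
    by apply: measurableU => //; exact: measurableU.
  apply: (le_trans (prU _ _ _)); [exact: measurableU | exact: mU |].
  by rewrite lerD2r; apply: prU.
have pA0 : pr P A0 = 0.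
  by have := Ha 0%N (leq0n L); rewrite /cdf -/A0 => ->; rewrite !mul0r.
have pAL : pr P AL <= il.
  have -> : AL = ~` [set t | X t <= a L].
    apply/seteqP; split => t /=; first by move=> h; apply/negP; rewrite -ltNge.
    by move=> /negP; rewrite -ltNge.
  rewrite pr_setC; last exact: meas_le.
  have := Ha L (leqnn L); rewrite /cdf => ->.
  rewrite /il mulfV ?gt_eqF // mul1r -/il; lra.
have pU : pr P (\big[setU/set0]_(l < L) S l) <= il.
  apply: (le_trans (pr_bigU P L mS)).
  have eqS l : (l < L)%N ->
      pr P (S l) = il * FT * (cdf P Y (lam * a l.+1) - cdf P Y (lam * a l)).
    move=> lL; rewrite /S Hind; [| exact: meas_Ioc | exact: meas_Ioc].
    rewrite !pr_Ioc; [| by rewrite ler_pM2l // mono | exact: mono].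
    by rewrite dF.
  rewrite (eq_bigr (fun l : 'I_L => il * FT *
     (cdf P Y (lam * a (l : nat).+1) - cdf P Y (lam * a (l : nat))))); last first.
    by move=> l _; exact: eqS.
  rewrite -mulr_sumr.
  rewrite -(big_mkord xpredT (fun l => cdf P Y (lam * a l.+1) - cdf P Y (lam * a l))).
  rewrite telescope_sumr //.
  have g0 : 0 <= cdf P Y (lam * a 0%N) by exact: pr_ge0.
  have g1 : cdf P Y (lam * a L) <= 1 by apply: pr_le1; exact: meas_le.
  have ilF : 0 <= il * FT by apply: mulr_ge0; exact: ltW.
  have h2 : il * FT * (cdf P Y (lam * a L) - cdf P Y (lam * a 0%N)) <= il * FT * 1.
    by apply: ler_wpM2l => //; lra.
  have h1 : il * FT <= il * 1 by apply: ler_wpM2l => //; exact: ltW.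
  rewrite mulr1 in h1 h2; lra.
lra.
Qed.

Lemma meas_eq d (T : measurableType d) (R : realType) (X Y : {mfun T >-> R}) (lam : R) :
  measurable [set t | Y t = lam * X t].
Proof.
have -> : [set t | Y t = lam * X t] = (fun t => Y t - lam * X t) @^-1` [set 0].
  apply/seteqP; split => t /= h; first by rewrite h subrr.
  by apply/eqP; rewrite -subr_eq0; apply/eqP.
have mf : measurable_fun setT (fun t => Y t - lam * X t).
  apply: measurable_realfun.measurable_funB; first exact: measurable_funPT.
  apply: measurable_realfun.measurable_funM; first exact: measurable_cst.
  exact: measurable_funPT.
by rewrite -[_ @^-1` _]setTI; apply: mf => //; exact: measurable_set1.
Qed.

Lemma pair_null d (T : measurableType d) (R : realType) (P : probability T R)
  (X Y : {mfun T >-> R}) (lam : R) :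
  0 < lam -> (forall t, 0 <= X t) -> continuous (cdf P X) ->
  (forall A B, measurable A -> measurable B ->
     pr P (X @^-1` A `&` Y @^-1` B) = pr P (X @^-1` A) * pr P (Y @^-1` B)) ->
  P [set t | Y t = lam * X t] = 0%E.
Proof.
move=> lam0 X0 Fc Hind; apply: pr0; first exact: meas_eq.
apply: small_zero; first exact: pr_ge0.
exact: pair_key.
Qed.

Lemma negl_bigU d (T : measurableType d) (R : realType) (P : probability T R)
  (I : Type) (s : seq I) (S : I -> set T) :
  (forall i, P.-negligible (S i)) -> P.-negligible (\big[setU/set0]_(i <- s) S i).
Proof.
move=> H; elim: s => [|x s IH]; first by rewrite big_nil; exact: negligible_set0.
by rewrite big_cons; apply: negligibleU.
Qed.

Lemma in_bigU_seq (I : eqType) (T : Type) (s : seq I) (S : I -> set T) (i : I) (t : T) :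
  i \in s -> S i t -> (\big[setU/set0]_(j <- s) S j) t.
Proof.
elim: s => [//|x s IH]; rewrite inE big_cons => /orP[/eqP->|his] h; first by left.
by right; apply: IH.
Qed.


Lemma gidx_inj (K M : nat) (i : 'I_K) (m m2 : 'I_M) :
  m != m2 -> rshift K (mxvec_index i m) != rshift K (mxvec_index i m2).
Proof.
apply: contra => /eqP /rshift_inj /cast_ord_inj /enum_rank_inj [->] //.
Qed.

Unset Implicit Arguments.

Theorem theorem3p4 (R : realType) (d : measure_display) (T : measurableType d)
  (P : probability T R) (K M : nat)
  (alpha : 'I_(K + K * M) -> {RV P >-> R})
  (Pst : 'I_K -> R) (Gst : 'I_M -> R) :
  (2 <= K)%N -> (0 < M)%N ->
  (forall k, 0 < Pst k) -> (forall m, 0 < Gst m) ->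
  (forall i t, 0 <= alpha i t) ->
  continuous (joint_cdf P (fun i => alpha i : T -> R)) ->
  (forall x, differentiable (joint_cdf P (fun i => alpha i : T -> R)) x) ->
  mutually_independent P (fun i => alpha i : T -> R) ->
  {ae P, forall t,
     let h := chan_h (fun i => alpha i : T -> R) t in
     let g := chan_g (fun i => alpha i : T -> R) t in
     ((exists p, is_optimal Pst Gst h g p /\ exists i, single_user i p)
       <-> (exists i m', dtdma_condition Pst Gst h g i m')) /\
     (forall i m', dtdma_condition Pst Gst h g i m' ->
        is_optimal Pst Gst h g (dtdma_power Gst g i m'))}.
Proof.
move=> K2 M0 P0 G0 a0 Jc _ Hind.
have Fc c : continuous (cdf P (alpha c)) := cdf_cont (c:=c) Hind Jc.
pose Z c := [set t | alpha c t = 0].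
have nZ c : P.-negligible (Z c).
  exists (Z c); split => //.
    have -> : Z c = [set t | alpha c t <= 0].
      apply/seteqP; split => t /= h; first by rewrite h.
      by apply/eqP; rewrite eq_le h a0.
    exact: meas_le.
  have -> : Z c = [set t | alpha c t <= 0].
    apply/seteqP; split => t /= h; first by rewrite h.
    by apply/eqP; rewrite eq_le h a0.
  rewrite (prE P (meas_le _ _)); congr (_%:E).
  exact: (cdf_at0 (a0 c) (Fc c)).
pose gi (i : 'I_K) (m : 'I_M) := rshift K (mxvec_index i m).
pose Es (q : 'I_K * 'I_M * 'I_M) :=
  if q.1.2 != q.2 then
    [set t | alpha (gi q.1.1 q.2) t = (Gst q.2 / Gst q.1.2) * alpha (gi q.1.1 q.1.2) t]
  else set0.
have nE q : P.-negligible (Es q).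
  rewrite /Es; case: ifP => hq; last exact: negligible_set0.
  exists [set t | alpha (gi q.1.1 q.2) t = (Gst q.2 / Gst q.1.2) * alpha (gi q.1.1 q.1.2) t].
  split => //; first exact: meas_eq.
  apply: pair_null => //.
  - by apply: divr_gt0.
  - apply: pair_indep => //; exact: gidx_inj.
pose N := (\big[setU/set0]_(c <- enum 'I_(K + K * M)) Z c) `|`
          (\big[setU/set0]_(q <- enum {: 'I_K * 'I_M * 'I_M}) Es q).
have nN : P.-negligible N by apply: negligibleU; apply: negl_bigU.
apply: (negligibleS _ nN) => t /= nQ; apply: contrapT => nNt; apply: nQ.
have hz c : alpha c t != 0.
  apply/eqP => hc; apply: nNt; left; apply: (@in_bigU_seq _ _ _ _ c) => //.
  by rewrite mem_enum.
have hq (i : 'I_K) (m m2 : 'I_M) : m != m2 ->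
    alpha (rshift K (mxvec_index i m2)) t <>
    Gst m2 / Gst m * alpha (rshift K (mxvec_index i m)) t.
  move=> mm h; apply: nNt; right; apply: (@in_bigU_seq _ _ _ _ (i, m, m2)).
    by rewrite mem_enum.
  by rewrite /Es /= mm.

have hpos c : 0 < alpha c t by rewrite lt_neqAle eq_sym hz a0.
apply: det_main => //.
- by move=> k; exact: hpos.
- by move=> k m; exact: hpos.
move=> i m m2 mm; apply/negP => /eqP e; apply: (hq i m m2 mm).
rewrite /chan_g in e.
move: e.
set x := alpha (rshift K (mxvec_index i m)) t.
set y := alpha (rshift K (mxvec_index i m2)) t.
move=> e.
have x0 : 0 < x := hpos _.
have y0 : 0 < y := hpos _.
have Gm := G0 m.
have e' : Gst m * y = Gst m2 * x.
  have : Gst m / x * (x * y) = Gst m2 / y * (x * y) by rewrite e.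
  have -> : Gst m / x * (x * y) = Gst m * y by field; rewrite ?gt_eqF //.
  by have -> : Gst m2 / y * (x * y) = Gst m2 * x by field; rewrite ?gt_eqF //.
have -> : Gst m2 / Gst m * x = Gst m2 * x / Gst m by ring.
rewrite -e'; field; rewrite ?gt_eqF //.
Qed.
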